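(* Let $X$ be a Tychonoff space with $|X|>1$ and $I\in\mathbb{A}(X)$. Then $I$ is a leaf vertex of $\mathbb{AG}(X)$ if and only if $X\setminus\overline{\mathcal{O}(I)}$ is a singleton.
   Context: $C(X)$ denotes the ring of all real-valued continuous functions on $X$; $\mathrm{Coz}(f)=\{x: f(x)\neq 0\}$; for $S\subseteq C(X)$, $\mathcal{O}(S)=\bigcup_{f\in S}\mathrm{Coz}(f)$. $\mathbb{A}(X)$ is the set of nonzero ideals $I$ of $C(X)$ for which there is a nonzero ideal $J$ with $IJ=\{0\}$; $\mathbb{AG}(X)$ has vertex set $\mathbb{A}(X)$, distinct $I,J$ adjacent iff $IJ=\{0\}$. A leaf vertex is a vertex adjacent to exactly one vertex. Overline denotes closure. *)

(* Defs.v *)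
From Stdlib Require Import Reals List.
Open Scope R_scope.

Record topology (X : Type) := {
  is_open : (X -> Prop) -> Prop;
  open_full : is_open (fun _ => True);
  open_inter : forall U V, is_open U -> is_open V -> is_open (fun x => U x /\ V x);
  open_union : forall F : (X -> Prop) -> Prop,
      (forall U, F U -> is_open U) -> is_open (fun x => exists U, F U /\ U x)
}.
Arguments is_open {X} t U.

Definition is_closed {X : Type} (T : topology X) (F : X -> Prop) : Prop :=
  is_open T (fun x => ~ F x).

Definition closure {X : Type} (T : topology X) (S : X -> Prop) : X -> Prop :=
  fun x => forall U, is_open T U -> U x -> exists y, U y /\ S y.

Definition R_open (U : R -> Prop) : Prop :=
  forall y, U y -> exists e, 0 < e /\ forall z, Rabs (z - y) < e -> U z.

Definition continuous {X : Type} (T : topology X) (f : X -> R) : Prop :=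
  forall U, R_open U -> is_open T (fun x => U (f x)).

Definition tychonoff {X : Type} (T : topology X) : Prop :=
  (forall x : X, is_closed T (fun y => y = x)) /\
  (forall (F : X -> Prop) (x : X), is_closed T F -> ~ F x ->
     exists f : X -> R, continuous T f /\ f x = 0 /\
       (forall y, F y -> f y = 1) /\ (forall y, 0 <= f y <= 1)).

(* Subsets of C(X) are predicates on X -> R; elements must be continuous. *)
Definition zerof {X : Type} : X -> R := fun _ => 0.

Definition ideal {X : Type} (T : topology X) (I : (X -> R) -> Prop) : Prop :=
  (forall f, I f -> continuous T f) /\
  I zerof /\
  (forall f g, I f -> I g -> I (fun x => f x + g x)) /\
  (forall f g, continuous T g -> I f -> I (fun x => g x * f x)).

Definition nonzero_set {X : Type} (I : (X -> R) -> Prop) : Prop :=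
  exists f, I f /\ f <> zerof.

Definition same_set {X : Type} (I J : (X -> R) -> Prop) : Prop :=
  forall f, I f <-> J f.

Definition prod_ideal {X : Type} (I J : (X -> R) -> Prop) : (X -> R) -> Prop :=
  fun h => exists l : list ((X -> R) * (X -> R)),
    Forall (fun p => I (fst p) /\ J (snd p)) l /\
    h = fold_right (fun p acc => fun x => fst p x * snd p x + acc x) zerof l.

Definition annihil {X : Type} (I J : (X -> R) -> Prop) : Prop :=
  forall h, prod_ideal I J h <-> h = zerof.

Definition in_A {X : Type} (T : topology X) (I : (X -> R) -> Prop) : Prop :=
  ideal T I /\ nonzero_set I /\
  exists J, ideal T J /\ nonzero_set J /\ annihil I J.

Definition adjacent {X : Type} (T : topology X) (I J : (X -> R) -> Prop) : Prop :=
  in_A T I /\ in_A T J /\ ~ same_set I J /\ annihil I J.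

(* leaf: adjacent to exactly one vertex (vertices = ideals, compared as sets) *)
Definition leaf {X : Type} (T : topology X) (I : (X -> R) -> Prop) : Prop :=
  in_A T I /\
  exists J, adjacent T I J /\ forall K, adjacent T I K -> same_set K J.

Definition coz {X : Type} (f : X -> R) : X -> Prop := fun x => f x <> 0.

Definition O_of {X : Type} (I : (X -> R) -> Prop) : X -> Prop :=
  fun x => exists f, I f /\ coz f x.

(* Main.v *)
Require Import Defs.
From Stdlib Require Import Reals List.
From Stdlib Require Import Classical FunctionalExtensionality PropExtensionality Lra Psatz.
Open Scope R_scope.

Lemma open_ext {X} (T : topology X) (U V : X -> Prop) :
  is_open T U -> (forall x, U x <-> V x) -> is_open T V.
Proof.
  intros HU H. assert (E : U = V).
  { apply functional_extensionality; intro x; apply propositional_extensionality; apply H. }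
  subst; auto.
Qed.

Lemma open_nbhd {X} (T : topology X) (S : X -> Prop) :
  (forall x, S x -> exists V, is_open T V /\ V x /\ forall y, V y -> S y) -> is_open T S.
Proof.
  intros H.
  apply open_ext with (U := fun x => exists V, (is_open T V /\ forall y, V y -> S y) /\ V x).
  - apply (open_union _ T). intros V [HV _]; exact HV.
  - intro x; split.
    + intros [V [[_ HV] Vx]]; auto.
    + intros Sx; destruct (H x Sx) as [V [HV [Vx HVS]]]; exists V; auto.
Qed.

Lemma empty_open {X} (T : topology X) : is_open T (fun _ => False).
Proof.
  apply open_ext with (U := fun x => exists V, (fun _ : X -> Prop => False) V /\ V x).
  - apply (open_union _ T). intros V [].
  - intro x; split; [intros [V [[] _]] | intros []].
Qed.

Lemma const_cont {X} (T : topology X) c : continuous T (fun _ => c).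
Proof.
  intros U HU. destruct (classic (U c)).
  - apply open_ext with (U := fun _ => True). apply (open_full _ T). tauto.
  - apply open_ext with (U := fun _ => False). apply empty_open. tauto.
Qed.

Lemma ball_open c e : R_open (fun z => Rabs (z - c) < e).
Proof.
  intros y Hy. exists (e - Rabs (y - c)). split; [lra|].
  intros z Hz. replace (z - c) with ((z - y) + (y - c)) by ring.
  eapply Rle_lt_trans; [apply Rabs_triang|lra].
Qed.

Lemma cont_ball {X} (T : topology X) f x e :
  continuous T f -> is_open T (fun y => Rabs (f y - f x) < e).
Proof. intros Hf; apply (Hf (fun z => Rabs (z - f x) < e)), ball_open. Qed.

Lemma sum_cont {X} (T : topology X) f g :
  continuous T f -> continuous T g -> continuous T (fun x => f x + g x).
Proof.
  intros Hf Hg U HU. apply open_nbhd. intros x Hx.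
  destruct (HU _ Hx) as [e [He HeU]].
  exists (fun y => Rabs (f y - f x) < e/2 /\ Rabs (g y - g x) < e/2).
  split; [apply (open_inter _ T); apply cont_ball; auto|].
  split.
  - replace (f x - f x) with 0 by ring; replace (g x - g x) with 0 by ring.
    rewrite Rabs_R0; lra.
  - intros y [H1 H2]. apply HeU.
    replace (f y + g y - (f x + g x)) with ((f y - f x) + (g y - g x)) by ring.
    eapply Rle_lt_trans; [apply Rabs_triang|lra].
Qed.

Lemma prod_cont {X} (T : topology X) f g :
  continuous T f -> continuous T g -> continuous T (fun x => f x * g x).
Proof.
  intros Hf Hg U HU. apply open_nbhd. intros x Hx.
  destruct (HU _ Hx) as [e [He HeU]].
  set (K := Rabs (f x) + Rabs (g x) + 1).
  assert (HK : 0 < K) by (unfold K; pose proof (Rabs_pos (f x)); pose proof (Rabs_pos (g x)); lra).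
  set (d := Rmin 1 (e / K)).
  assert (Hd1 : d <= 1) by apply Rmin_l.
  assert (Hd2 : d <= e / K) by apply Rmin_r.
  assert (Hd0 : 0 < d).
  { unfold d. apply Rmin_glb_lt; [lra|]. apply Rdiv_lt_0_compat; lra. }
  exists (fun y => Rabs (f y - f x) < d /\ Rabs (g y - g x) < d).
  split; [apply (open_inter _ T); apply cont_ball; auto|].
  split.
  - replace (f x - f x) with 0 by ring; replace (g x - g x) with 0 by ring.
    rewrite Rabs_R0; lra.
  - intros y [H1 H2]. apply HeU.
    set (a := f y - f x) in *. set (b := g y - g x) in *.
    replace (f y * g y - f x * g x) with (a * (g x + b) + f x * b) by (unfold a, b; ring).
    assert (E1 : Rabs (a * (g x + b) + f x * b) <= Rabs a * (Rabs (g x) + Rabs b) + Rabs (f x) * Rabs b).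
    { eapply Rle_trans; [apply Rabs_triang|]. rewrite !Rabs_mult.
      apply Rplus_le_compat_r. apply Rmult_le_compat_l; [apply Rabs_pos|apply Rabs_triang]. }
    assert (E2 : d * K <= e).
    { apply Rmult_le_compat_r with (r := K) in Hd2; [|lra].
      unfold Rdiv in Hd2. rewrite Rmult_assoc, Rinv_l, Rmult_1_r in Hd2; lra. }
    pose proof (Rabs_pos a). pose proof (Rabs_pos b). pose proof (Rabs_pos (f x)).
    pose proof (Rabs_pos (g x)).
    assert (Rabs a * (Rabs (g x) + Rabs b) + Rabs (f x) * Rabs b < d * K).
    { unfold K. nra. }
    lra.
Qed.

Definition Ann {X} (T : topology X) (I : (X -> R) -> Prop) (h : X -> R) : Prop :=
  continuous T h /\ forall f, I f -> forall x, f x * h x = 0.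

Lemma nonzero_R_open : R_open (fun z => z <> 0).
Proof.
  intros y Hy. exists (Rabs y). split; [apply Rabs_pos_lt; auto|].
  intros z Hz Hz0. subst z. rewrite Rminus_0_l, Rabs_Ropp in Hz. lra.
Qed.

Lemma ann_closure {X} (T : topology X) I h y :
  Ann T I h -> closure T (O_of I) y -> h y = 0.
Proof.
  intros [Hc Ha] Hy. apply NNPP; intro Hn.
  destruct (Hy (fun x => h x <> 0)) as [z [Hz [f [If fz]]]].
  - apply (Hc (fun z => z <> 0)), nonzero_R_open.
  - exact Hn.
  - pose proof (Ha f If z). apply Rmult_integral in H as [H|H]; auto.
Qed.

Lemma closure_closed {X} (T : topology X) S : is_closed T (closure T S).
Proof.
  unfold is_closed. apply open_nbhd. intros x Hx.
  apply not_all_ex_not in Hx as [U HU].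
  apply imply_to_and in HU as [HUo HU].
  apply imply_to_and in HU as [Ux HU].
  exists U. split; [auto|]. split; [auto|].
  intros y Uy Hcl. destruct (Hcl U HUo Uy) as [z [Uz Sz]]. apply HU; eauto.
Qed.

Lemma closed_union {X} (T : topology X) F G :
  is_closed T F -> is_closed T G -> is_closed T (fun x => F x \/ G x).
Proof.
  intros HF HG. unfold is_closed in *.
  eapply open_ext; [apply (open_inter _ T); [exact HF|exact HG]|]. simpl. tauto.
Qed.

Lemma annihil_pt {X} (I J : (X -> R) -> Prop) f g x :
  annihil I J -> I f -> J g -> f x * g x = 0.
Proof.
  intros H If Jg.
  assert (E : (fun x => f x * g x + zerof x) = zerof).
  { apply H. exists ((f, g) :: nil). split; [|reflexivity].
    constructor; simpl; auto. }
  pose proof (equal_f E x) as Ex. unfold zerof in Ex. simpl in Ex. lra.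
Qed.

Lemma annihil_of {X} (I J : (X -> R) -> Prop) :
  (forall f g, I f -> J g -> forall x, f x * g x = 0) -> annihil I J.
Proof.
  intros H h; split.
  - intros [l [Hl ->]]. induction Hl as [|p l [Ip Jp] Hl IH].
    + reflexivity.
    + cbn [fold_right]. rewrite IH. apply functional_extensionality; intro y.
      unfold zerof. rewrite (H _ _ Ip Jp y). ring.
  - intros ->. exists nil. split; auto.
Qed.

Lemma nz_ex {X} (h : X -> R) : h <> zerof -> exists x, h x <> 0.
Proof.
  intros H. apply NNPP; intro Hn. apply H. apply functional_extensionality; intro x.
  apply NNPP; intro Hx. apply Hn; eauto.
Qed.

Lemma nz_pt {X} (h : X -> R) x : h x <> 0 -> h <> zerof.
Proof. intros H E; apply H; rewrite E; reflexivity. Qed.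

Lemma adj_of {X} (T : topology X) I K :
  in_A T I -> ideal T K -> nonzero_set K -> (forall h, K h -> Ann T I h) -> adjacent T I K.
Proof.
  intros HI HK HKnz HKA.
  pose proof HI as HI'. destruct HI' as [HIi [HInz _]].
  split; [exact HI|]. split; [|split].
  - split; [auto|]. split; [auto|]. exists I. split; [auto|]. split; [auto|].
    apply annihil_of. intros f g Kf Ig x. destruct (HKA f Kf) as [_ Ha].
    rewrite Rmult_comm. apply Ha; auto.
  - intros Hs. destruct HInz as [f [If fnz]]. destruct (nz_ex f fnz) as [x Hx].
    apply Hs in If. destruct (HKA f If) as [_ Ha].
    pose proof (Ha f (proj2 (Hs f) If) x). apply Rmult_integral in H as [H|H]; auto.
  - apply annihil_of. intros f g If Kg x. destruct (HKA g Kg) as [_ Ha]. apply Ha; auto.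
Qed.

Lemma adj_sub {X} (T : topology X) I K : adjacent T I K -> forall h, K h -> Ann T I h.
Proof.
  intros [_ [[[HKc _] _] [_ HIK]]] h Kh. split; auto.
  intros f If x. eapply annihil_pt; eauto.
Qed.

Definition Lp {X} (T : topology X) I (p : X) : (X -> R) -> Prop :=
  fun h => Ann T I h /\ h p = 0.

Lemma Lp_ideal {X} (T : topology X) I p : ideal T (Lp T I p).
Proof.
  split; [|split; [|split]].
  - intros f [[Hc _] _]; auto.
  - split; [split|]. apply const_cont. intros; unfold zerof; ring. reflexivity.
  - intros f g [[Hfc Hfa] Hfp] [[Hgc Hga] Hgp]. split; [split|].
    + apply sum_cont; auto.
    + intros k Ik x. rewrite Rmult_plus_distr_l, (Hfa k Ik x), (Hga k Ik x); ring.
    + rewrite Hfp, Hgp; ring.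
  - intros f g Hg [[Hfc Hfa] Hfp]. split; [split|].
    + apply prod_cont; auto.
    + intros k Ik x. replace (k x * (g x * f x)) with (g x * (k x * f x)) by ring.
      rewrite (Hfa k Ik x); ring.
    + rewrite Hfp; ring.
Qed.

Lemma sep {X} (T : topology X) (HT : tychonoff T) I y p :
  ~ closure T (O_of I) y -> y <> p ->
  exists g, Ann T I g /\ g y = 1 /\ g p = 0.
Proof.
  intros Hy Hyp.
  destruct HT as [HT1 HT2].
  destruct (HT2 (fun z => closure T (O_of I) z \/ z = p) y) as [f [Hf [Hfy [HfF _]]]].
  - apply closed_union; [apply closure_closed|apply HT1].
  - intros [H|H]; auto.
  - exists (fun x => 1 - f x). split; [split|split].
    + intros U HU. apply (Hf (fun z => U (1 - z))).
      intros w Hw. destruct (HU _ Hw) as [e [He HeU]]. exists e. split; auto.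
      intros z Hz. apply HeU. replace (1 - z - (1 - w)) with (- (z - w)) by ring.
      rewrite Rabs_Ropp; auto.
    + intros k Ik x. destruct (Req_dec (k x) 0) as [E|E]; [rewrite E; ring|].
      rewrite (HfF x); [ring|]. left. intros U HU Ux. exists x. split; auto.
      exists k; auto.
    + rewrite Hfy; ring.
    + rewrite (HfF p); [ring|]. right; auto.
Qed.

Lemma full {X} (T : topology X) I K x0 :
  (forall y, ~ closure T (O_of I) y <-> y = x0) ->
  ideal T K -> nonzero_set K -> (forall h, K h -> Ann T I h) ->
  forall h, Ann T I h -> K h.
Proof.
  intros Hx0 HK [k [Kk knz]] HKA h Hh.
  destruct (nz_ex k knz) as [x Hx].
  assert (Hxc : ~ closure T (O_of I) x).
  { intro Hc. apply Hx. eapply ann_closure; eauto. }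
  apply Hx0 in Hxc. subst x.
  set (c := h x0 / k x0).
  assert (E : h = fun y => (fun _ => c) y * k y).
  { apply functional_extensionality; intro y. destruct (classic (y = x0)) as [->|Hne].
    - unfold c; field; auto.
    - assert (Hc : closure T (O_of I) y).
      { apply NNPP; intro Hn. apply Hne, Hx0, Hn. }
      rewrite (ann_closure T I h y Hh Hc), (ann_closure T I k y (HKA k Kk) Hc). ring. }
  rewrite E. destruct HK as [_ [_ [_ HKm]]]. apply HKm; auto. apply const_cont.
Qed.

Theorem mainTheorem13 (X : Type) (T : topology X) (HT : tychonoff T)
  (H2 : exists x y : X, x <> y)
  (I : (X -> R) -> Prop) (HI : in_A T I) :
  leaf T I <->
  (exists x0 : X, forall y : X, ~ closure T (O_of I) y <-> y = x0).
Proof.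
  split.
  - intros [_ [J [HJ Huniq]]].
    pose proof (adj_sub T I J HJ) as HJA.
    destruct HJ as [_ [[_ [[h0 [Jh0 h0nz]] _]] _]].
    destruct (nz_ex h0 h0nz) as [a Ha].
    assert (Hac : ~ closure T (O_of I) a).
    { intro Hc. apply Ha. eapply ann_closure; eauto. }
    exists a. intro y; split.
    + intro Hy. apply NNPP; intro Hya.
      destruct (sep T HT I y a Hy Hya) as [gy [Agy [gyy gya]]].
      destruct (sep T HT I a y Hac (fun e => Hya (eq_sym e))) as [ga [Aga [gaa gay]]].
      assert (S1 : same_set (Lp T I a) J).
      { apply Huniq. apply adj_of; auto. apply Lp_ideal.
        exists gy. split. split; auto. apply (nz_pt gy y). lra.
        intros h [Ah _]; auto. }
      assert (S2 : same_set (Lp T I y) J).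
      { apply Huniq. apply adj_of; auto. apply Lp_ideal.
        exists ga. split. split; auto. apply (nz_pt ga a). lra.
        intros h [Ah _]; auto. }
      assert (L1 : Lp T I a gy) by (split; auto).
      apply S1, S2 in L1. destruct L1 as [_ L1]. lra.
    + intros ->. exact Hac.
  - intros [x0 Hx0]. split; [exact HI|].
    pose proof HI as HI'. destruct HI' as [HIi [HInz [J [HJi [HJnz HIJ]]]]].
    assert (HJA : forall h, J h -> Ann T I h).
    { intros h Jh. split. apply HJi; auto. intros f If x. eapply annihil_pt; eauto. }
    exists J. split.
    + apply adj_of; auto.
    + intros K HK. pose proof (adj_sub T I K HK) as HKA.
      destruct HK as [_ [[HKi [HKnz _]] _]].
      intro h; split.
      * intro Kh. apply (full T I J x0 Hx0 HJi HJnz HJA). auto.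
      * intro Jh. apply (full T I K x0 Hx0 HKi HKnz HKA). auto.
Qed.
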